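(* Let $p$ be a prime, let $G$ be a finite $p$-group and let $C$ be a subgroup of $G$ of index $p$. Then for every $g \in G \setminus C$ we have $\log_p |G'| \leq b(g) + \log_p |C'|$.
   Context: $G'$ and $C'$ denote the derived subgroups of $G$ and $C$. For $g$ in a finite $p$-group $G$, the breadth $b(g)$ is defined by $|G : C_G(g)| = p^{b(g)}$, where $C_G(g)$ is the centralizer of $g$ in $G$. *)

(* Defs.v *)
From mathcomp Require Import all_boot all_fingroup all_solvable.
Set Implicit Arguments. Unset Strict Implicit. Unset Printing Implicit Defensive.
Local Open Scope group_scope.

Definition breadth (gT : finGroupType) (p : nat) (G : {set gT}) (g : gT) : nat :=
  logn p #|G : 'C_G[g]|.

(* Main.v *)
Require Import Defs.
From mathcomp Require Import all_boot all_fingroup all_solvable.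
Set Implicit Arguments. Unset Strict Implicit. Unset Printing Implicit Defensive.
Local Open Scope group_scope.

Lemma keyL (gT : finGroupType) (A : {group gT}) (x : gT) :
  abelian A -> x \in 'N(A) -> (#|(A <*> <[x]>)^`(1)| <= #|x ^: A|)%N.
Proof.
move=> abA nAx.
have cA : forall a, a \in A -> [~ a, x] \in A.
  by move=> a Aa; rewrite /commg groupM ?groupV // memJ_norm.
set K := [set [~ a, x] | a in A].
have gK : group_set K.
  apply/group_setP; split.
    by apply/imsetP; exists 1; rewrite ?group1 // comm1g.
  move=> _ _ /imsetP[a Aa ->] /imsetP[b Ab ->].
  apply/imsetP; exists (a * b); first by rewrite groupM.
  rewrite commMgJ; congr (_ * _).
  by rewrite /conjg -(centsP abA b Ab ([~ a, x]) (cA a Aa)) mulKg.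
pose Kg := Group gK.
have sKA : Kg \subset A by apply/subsetP=> _ /imsetP[a Aa ->]; apply: cA.
have nKx : x \in 'N(Kg).
  rewrite inE; apply/subsetP=> _ /imsetP[_ /imsetP[a Aa ->] ->].
  apply/imsetP; exists (a ^ x); first by rewrite memJ_norm.
  by rewrite conjRg /(x ^ x) mulKg.
have nKA : A \subset 'N(Kg) by apply: sub_abelian_norm.
have nKX : <[x]> \subset 'N(Kg) by rewrite cycle_subG.
have nKJ : A <*> <[x]> \subset 'N(Kg) by rewrite join_subG nKA.
have sJK : (A <*> <[x]>)^`(1) \subset Kg.
  apply: der1_min => //.
  rewrite quotientY // abelianY quotient_abelian // quotient_abelian ?cycle_abelian //=.
  apply: (@quotient_cents2r _ _ _ Kg).
  rewrite gen_subG; apply/subsetP=> _ /imset2P[y a Xy Aa ->]; case/cycleP: Xy => n ->; rewrite -invg_comm groupV.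
  elim: n => [|n IH]; first by rewrite expg0 commg1 group1.
  by rewrite expgSr commgMJ groupM //= ?memJ_norm //; apply/imsetP; exists a.
apply: leq_trans (subset_leq_card sJK) _.
have -> : (Kg : {set gT}) = (fun y => y^-1 * x) @: (x ^: A).
  rewrite /= /K /class -imset_comp; apply: eq_imset => a /=.
  by rewrite /commg conjgE !invMg invgK !mulgA.
exact: (leq_imset_card (fun y => y^-1 * x)).
Qed.

Lemma keyL' (gT : finGroupType) (H A : {group gT}) (x : gT) :
  abelian A -> x \in 'N(A) -> H :=: A <*> <[x]> -> (#|H^`(1)| <= #|x ^: A|)%N.
Proof.
move=> abA nAx eH.
have -> : H = (A <*> <[x]>)%G by apply: val_inj.
exact: keyL.
Qed.

Theorem lemma2p1 (gT : finGroupType) (p : nat) (G C : {group gT}) (g : gT) :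
  prime p -> p.-group G -> C \subset G -> #|G : C| = p ->
  g \in G :\: C ->
  (logn p #|G^`(1)| <= breadth p G g + logn p #|C^`(1)|)%N.
Proof.
move=> pr pG sCG iCG /setDP[Gg nCg].
have nCG : C <| G by apply: (p_maximal_normal pG); apply: p_index_maximal; rewrite ?iCG.
have nDG : C^`(1) <| G := char_normal_trans (der_char 1 C) nCG.
have nDG' : G \subset 'N(C^`(1)) by case/andP: nDG.
have nCG' : G \subset 'N(C) by case/andP: nCG.
have defG : C <*> <[g]> = G.
  have sJG : C <*> <[g]> \subset G by rewrite join_subG sCG cycle_subG.
  have sCJ : C \subset C <*> <[g]> by apply: joing_subl.
  have := Lagrange_index sJG sCJ; rewrite iCG => E.
  have h1 : #|C <*> <[g]> : C| != 1%N.
    apply: contra nCg => /eqP/(index1g sCJ) ->.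
    by rewrite mem_gen // inE cycle_id orbT.
  have h2 : #|G : C <*> <[g]>| = 1%N.
    have dv : #|G : C <*> <[g]>| %| p by rewrite -E dvdn_mulr.
    case/primeP: (pr) => _ /(_ _ dv) /orP [/eqP //|/eqP e].
    exfalso; rewrite e in E; move: h1; rewrite -(eqn_pmul2l (prime_gt0 pr)) E muln1.
    by rewrite eqxx.
  by have := index1g sJG h2 => ->.
set D := C^`(1).
have nDg : g \in 'N(D) by apply: (subsetP nDG').
have nDC : C \subset 'N(D) := subset_trans sCG nDG'.
have nCgg : g \in 'N(C) by apply: (subsetP nCG').
have K := @keyL' _ (G / D)%G (C / D)%G (coset D g).
have abCD : abelian (C / D) by have := der_abelian 0 C; rewrite derg0.
have nCDg : coset D g \in 'N(C / D).
  have : <[g]> / D \subset 'N(C / D) by apply: quotient_norms; rewrite cycle_subG.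
  by move/subsetP; apply; apply: mem_quotient; apply: cycle_id.
have eJ : G / D = C / D <*> <[coset D g]>.
  by rewrite -quotient_cycle // -quotientY ?defG // cycle_subG.
have {}K := K abCD nCDg eJ.
rewrite -quotient_der // card_quotient in K; last first.
  exact: subset_trans (der_sub 1 G) nDG'.
rewrite -quotient_class // in K.
have K2 : (#|G^`(1)| <= #|D| * #|G : 'C_G[g]|)%N.
  rewrite -(Lagrange (dergS 1 sCG)) leq_mul2l; apply/orP; right.
  apply: leq_trans K _; apply: leq_trans (leq_quotient _ _) _.
  by rewrite index_cent1; apply: subset_leq_card; apply: imsetS.
rewrite (card_pgroup (pgroupS (der_sub 1 G) pG)) in K2.
rewrite (card_pgroup (pgroupS (subset_trans (der_sub 1 C) sCG) pG)) in K2.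
have pI : p.-nat #|G : 'C_G[g]| := pnat_dvd (dvdn_indexg _ _) pG.
rewrite -(part_pnat_id pI) p_part -expnD leq_exp2l ?prime_gt1 // in K2.
by rewrite /breadth addnC.
Qed.
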